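(* Fix $t\in[0,T]$ (and $\omega$). Assume $\nu(\{\psi_t>0\})>0$ and $\nu(\{\psi_t<0\})>0$, and let $c,C\in(0,\infty)$ be such that $\nu(\{\psi_t>C\})>0$ and $\nu(\{\psi_t<-c\})>0$. Then for any $u\in\mathrm L^2(\nu)\cap\mathrm L^\infty(\nu)$ and any $$\pi_t^*\in\operatorname{argmin}_{\pi\in\mathcal C}\left\{\int_{\mathbb R^*}g_\alpha(u(x)-\pi\psi_t(x))\,\nu(dx)-\pi\varphi_t\right\}$$ it holds almost surely that $$-3\frac{\|u\|_\infty}{C}-2\frac{|\varphi_t|}{\alpha\nu(\psi_t>C)C^2}-\frac{\sqrt2}{\sqrt{\alpha\nu(\psi_t>C)}\,C}\sqrt{|u|_\alpha}\ \le\ \pi_t^*\ \le\ 3\frac{\|u\|_\infty}{c}+2\frac{|\varphi_t|}{\alpha\nu(\psi_t<-c)c^2}+\frac{\sqrt2}{\sqrt{\alpha\nu(\psi_t<-c)}\,c}\sqrt{|u|_\alpha}.$$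
   Context: $\nu$ is a positive measure on $\mathbb R^*=\mathbb R\setminus\{0\}$ with $\nu(\{0\})=0$ and $\int(1\wedge|x|^2)\nu(dx)<\infty$ (Lévy measure of a Poisson point process on a filtered probability space). $\varphi$ is a uniformly bounded predictable real process and $\psi=\psi_t(x)$ a uniformly bounded predictable process with $\mathbb E\int_0^T\int\psi^2 d\nu dt<\infty$ and $\psi>-1$. $\alpha>0$, $g_\alpha(y)=\frac{e^{\alpha y}-\alpha y-1}{\alpha}$, and $|u|_\alpha:=\int_{\mathbb R^*}g_\alpha(u(x))\,\nu(dx)$; $\|u\|_\infty$ is the $\nu$-essential supremum of $|u|$. $\mathcal C\subseteq\mathbb R$ is a closed set with $0\in\mathcal C$ (the constraint set for strategies). *)

(* Defs.v *)
From HB Require Import structures.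
From mathcomp Require Import all_boot all_order all_algebra.
From mathcomp Require Import all_classical all_reals all_analysis.
From mathcomp Require Import ess_sup_inf.
Set Implicit Arguments. Unset Strict Implicit. Unset Printing Implicit Defensive.
Import Order.TTheory GRing.Theory Num.Theory.
Import numFieldNormedType.Exports.
Local Open Scope classical_set_scope.
Local Open Scope ring_scope.

Definition g_alpha (R : realType) (a y : R) : R :=
  (expR (a * y) - a * y - 1) / a.

Definition abs_alpha (R : realType) (nu : {measure set R -> \bar R})
  (a : R) (u : R -> R) : \bar R :=
  (\int[nu]_x (g_alpha a (u x))%:E)%E.

Definition Linf_norm (R : realType) (nu : {measure set R -> \bar R})
  (u : R -> R) : \bar R :=
  ess_sup nu (fun x => (`|u x|)%:E).

Definition objective (R : realType) (nu : {measure set R -> \bar R})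
  (a : R) (u psi : R -> R) (phi p : R) : \bar R :=
  ((\int[nu]_x (g_alpha a (u x - p * psi x))%:E) - (p * phi)%:E)%E.

Definition is_argmin (R : realType) (Cset : set R) (F : R -> \bar R) (p : R) : Prop :=
  Cset p /\ (forall q, Cset q -> (F p <= F q)%E).

(* Main.v *)
Require Import Defs.
From HB Require Import structures.
From mathcomp Require Import all_boot all_order all_algebra.
From mathcomp Require Import all_classical all_reals all_analysis.
From mathcomp Require Import ess_sup_inf.
From mathcomp Require Import measurable_realfun ring lra.
Import Order.TTheory GRing.Theory Num.Theory.
Import numFieldNormedType.Exports.
Local Open Scope classical_set_scope.
Local Open Scope ring_scope.

Lemma expR_ge_quad (R : realType) (x : R) : 0 <= x -> 1 + x + x ^+ 2 / 2 <= expR x.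
Proof.
move=> x_ge0; rewrite /expR.
pose f (i : nat) : R := (i == 0)%:R + x *+ (i == 1) + x ^+ 2 / 2 *+ (i == 2).
have F m : (2 < m)%N -> \sum_(0 <= i < m) f i = 1 + x + x ^+ 2 / 2.
  move=> m2; rewrite (@big_cat_nat _ _ _ 3)//=.
  rewrite [X in _ + X]big_nat_cond [X in _ + X]big1 ?addr0; last first.
    by move=> i /andP[/andP[i3 _] _]; rewrite /f !gtn_eqF// ?(ltn_trans _ i3)// !mulr0n !addr0.
  rewrite big_mkord !big_ord_recr big_ord0 /=.
  by rewrite /f /= !mulr0n !mulr1n !addr0 !add0r.
rewrite (_ : 1 + x + x ^+ 2 / 2 = limn (series f)); last first.
  by apply/esym/(@lim_near_cst R^o) => //; near=> k; apply: F; near: k.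
apply: ler_lim; first by apply: is_cvg_near_cst; near=> k; apply: F; near: k.
  exact: is_cvg_series_exp_coeff.
near=> k; apply: ler_sum => -[|[|[|i]]] _; rewrite /f /exp_coeff/= ?add0r.
- by rewrite !(mulr0n, expr0, addr0, divr1).
- by rewrite !(mulr0n, mulr1n, expr1, addr0, add0r, divr1).
- by rewrite !(mulr0n, mulr1n, addr0, add0r).
- by rewrite !mulr0n ?addr0 divr_ge0// exprn_ge0.
Unshelve. all: by end_near. Qed.

Lemma g_ge0 (R : realType) (a y : R) : 0 < a -> 0 <= g_alpha a y.
Proof.
move=> a0; rewrite /g_alpha divr_ge0 ?(ltW a0)//.
have := expR_ge1Dx (a * y); lra.
Qed.

Lemma g_quad (R : realType) (a y : R) : 0 < a -> 0 <= y -> a * y ^+ 2 / 2 <= g_alpha a y.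
Proof.
move=> a0 y0; rewrite /g_alpha ler_pdivlMr// .
have := @expR_ge_quad R (a*y) (mulr_ge0 (ltW a0) y0).
have -> : (a * y) ^+ 2 = a * (a * y ^+ 2) by rewrite exprMn expr2; ring.
nra.
Qed.

Lemma expR_sub1_le (R : realType) (z : R) : expR z - 1 <= z * expR z.
Proof.
have h := expR_ge1Dx (- z).
have e : expR z * expR (- z) = 1 by rewrite expRxMexpNx_1.
have := expR_gt0 z; nra.
Qed.

Lemma g_up (R : realType) (a m y : R) : 0 < a -> `|y| <= m ->
  g_alpha a y <= a * expR (a * m) * y ^+ 2.
Proof.
move=> a0 ym; rewrite /g_alpha ler_pdivrMr//.
set z := a * y.
have hz : z <= a * m.
  by rewrite /z ler_pM2l//; exact: le_trans (ler_norm y) ym.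
have M1 : expR z <= expR (a * m) by rewrite ler_expR.
have m0 : 0 <= m := le_trans (normr_ge0 y) ym.
have M0 : 1 <= expR (a * m) by rewrite -expR0 ler_expR mulr_ge0// ltW.
have e1 := @expR_sub1_le R z.
have e2 := expR_ge1Dx z.
have ep := expR_gt0 z.
have -> : a * expR (a * m) * y ^+ 2 * a = expR (a * m) * z ^+ 2 by rewrite /z; ring.
have [z0|z0] := leP 0 z.
- have : z * (expR z - 1) <= z * (z * expR z) by rewrite ler_wpM2l.
  nra.
- nra.
Qed.

Lemma alg_key (R : realType) (a n d q ui ua b : R) : 0 < a -> 0 < n -> 0 < d ->
  0 <= ui -> 0 <= ua -> 0 <= b -> ui < q * d ->
  a * (q * d - ui) ^+ 2 / 2 * n <= ua + q * b ->
  q * d <= 2 * ui + 2 * b / (a * n * d) + Num.sqrt 2 / Num.sqrt (a * n) * Num.sqrt ua.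
Proof.
move=> a0 n0 d0 ui0 ua0 b0 big H.
set s := Num.sqrt 2 / Num.sqrt (a * n) * Num.sqrt ua.
have an0 : 0 < a * n by rewrite mulr_gt0.
have s0 : 0 <= s by rewrite /s !mulr_ge0 ?sqrtr_ge0 ?invr_ge0 ?sqrtr_ge0.
set K := a * n / 2.
have K0 : 0 < K by rewrite /K divr_gt0.
have Ks : K * s ^+ 2 = ua.
  rewrite /s !exprMn exprVn !sqr_sqrtr ?(ltW an0) // /K.
  by field; rewrite !gt_eqF.
set B := b / d.
have B0 : 0 <= B by rewrite /B divr_ge0 // ltW.
have qb : q * b = B * (q * d) by rewrite /B; field; rewrite !gt_eqF.
have BK : 2 * b / (a * n * d) = B / K.
  by rewrite /B /K; field; rewrite !gt_eqF.
have KBK : K * (B / K) = B by rewrite mulrC divfK // gt_eqF.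
have BK0 : 0 <= B / K by rewrite divr_ge0 // ltW.
rewrite BK.
set X := q * d - ui.
have HK : K * X ^+ 2 <= ua + B * ui + B * X.
  have -> : K * X ^+ 2 = a * (q * d - ui) ^+ 2 / 2 * n by rewrite /K /X; field.
  rewrite (le_trans H)// qb /X; lra.
have X0 : 0 < X by rewrite /X subr_gt0.
suff : X <= ui + B / K + s by rewrite /X; lra.
rewrite leNgt; apply/negP => hT.
have h1 : K * X * (ui + B / K + s) < K * X * X by rewrite ltr_pM2l // mulr_gt0.
have h2 : B <= K * X.
  rewrite -KBK ler_wpM2l ?ltW //; lra.
have h3 : ua <= K * s * X.
  rewrite -Ks expr2 mulrA ler_wpM2l ?(mulr_ge0 (ltW K0) s0) //; lra.
have e : K * X * (ui + B / K + s) = (K * X) * ui + X * (K * (B / K)) + K * s * X by ring.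
rewrite KBK in e.
have h4 : B * ui <= K * X * ui by rewrite ler_wpM2r.
have : K * X ^+ 2 = K * X * X by ring.
nra.
Qed.

Lemma measurable_g (R : realType) (a : R) (f : R -> R) :
  measurable_fun setT f -> measurable_fun setT (fun x => (g_alpha a (f x))%:E).
Proof.
move=> mf; apply/measurable_EFinP; rewrite /g_alpha.
apply: measurable_funM; last exact: measurable_cst.
apply: measurable_funB; last exact: measurable_cst.
apply: measurable_funB; last exact: measurable_funM (measurable_cst _) mf.
apply: measurableT_comp; first exact: measurable_expR.
exact: measurable_funM (measurable_cst _) mf.
Qed.

Lemma small_case (R : realType) (a n d q ui ua b : R) : 0 < a -> 0 <= n -> 0 < d ->
  0 <= ui -> 0 <= b -> q * d <= ui ->
  q <= 3 * ui / d + 2 * b / (a * n * d ^+ 2) + Num.sqrt 2 / (Num.sqrt (a * n) * d) * Num.sqrt ua.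
Proof.
move=> a0 n0 d0 ui0 b0 small.
have t1 : 0 <= 2 * b / (a * n * d ^+ 2).
  by rewrite divr_ge0 //; [nra | rewrite !mulr_ge0 // ?ltW // sqr_ge0].
have t0 : 0 <= Num.sqrt 2 / (Num.sqrt (a * n) * d) by rewrite divr_ge0 // mulr_ge0 // ?sqrtr_ge0 // ltW.
have t2 : 0 <= Num.sqrt 2 / (Num.sqrt (a * n) * d) * Num.sqrt ua.
  by rewrite mulr_ge0 // sqrtr_ge0.
have t3 : q <= 3 * ui / d by rewrite ler_pdivlMr //; lra.
lra.
Qed.

Lemma alg_key2 (R : realType) (a n d q ui ua b : R) : 0 < a -> 0 < n -> 0 < d ->
  0 <= ui ->
  q * d <= 2 * ui + 2 * b / (a * n * d) + Num.sqrt 2 / Num.sqrt (a * n) * Num.sqrt ua ->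
  q <= 3 * ui / d + 2 * b / (a * n * d ^+ 2) + Num.sqrt 2 / (Num.sqrt (a * n) * d) * Num.sqrt ua.
Proof.
move=> a0 n0 d0 ui0 H.
have an0 : 0 < Num.sqrt (a * n) by rewrite sqrtr_gt0 mulr_gt0.
rewrite -(ler_pM2r d0).
have -> : (3 * ui / d + 2 * b / (a * n * d ^+ 2) + Num.sqrt 2 / (Num.sqrt (a * n) * d) * Num.sqrt ua) * d
  = ui + (2 * ui + 2 * b / (a * n * d) + Num.sqrt 2 / Num.sqrt (a * n) * Num.sqrt ua).
  by field; rewrite !gt_eqF.
lra.
Qed.

Lemma key (R : realType) (nu : {measure set R -> \bar R}) (A : set R) (mA : measurable A)
  (f : R -> R) (mf : measurable_fun setT f) (a d q ui ua b : R) :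
  0 < a -> 0 < d -> 0 <= ui -> 0 <= ua -> 0 <= b -> (0 < nu A)%E ->
  {ae nu, forall x, A x -> q * d - ui <= f x} ->
  (\int[nu]_x (g_alpha a (f x))%:E <= (ua + q * b)%:E)%E ->
  q <= 3 * ui / d + 2 * b / (a * fine (nu A) * d ^+ 2)
     + Num.sqrt 2 / (Num.sqrt (a * fine (nu A)) * d) * Num.sqrt ua.
Proof.
move=> a0 d0 ui0 ua0 b0 hA hae hint.
have n0 : 0 <= fine (nu A) by apply: fine_ge0; exact: measure_ge0.
have [small|big] := leP (q * d) ui; first exact: small_case.
set X := q * d - ui.
have X0 : 0 < X by rewrite /X subr_gt0.
have mg := @measurable_g R a f mf.
have low : ((a * X ^+ 2 / 2)%:E * nu A <= \int[nu]_x (g_alpha a (f x))%:E)%E.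
  rewrite -integral_cst//.
  have sub : (\int[nu]_(x in A) (g_alpha a (f x))%:E <= \int[nu]_x (g_alpha a (f x))%:E)%E.
    by apply: ge0_subset_integral => //; move=> x _; rewrite lee_fin g_ge0.
  apply: le_trans sub.
  apply: ae_ge0_le_integral => //.
  - by move=> x _; rewrite /cst lee_fin; apply: divr_ge0 => //; apply: mulr_ge0; [exact: ltW|exact: sqr_ge0].
  - by move=> x _; rewrite lee_fin g_ge0.
  - exact: measurable_funS mg.
  apply: filterS hae => x hx Ax; rewrite /cst lee_fin.
  have fX : X <= f x by exact: hx.
  apply: le_trans (@g_quad R a (f x) a0 (le_trans (ltW X0) fX)).
  rewrite ler_pM2r// ler_pM2l// ler_sqr// ?nnegrE ?(ltW X0)//.
  exact: le_trans (ltW X0) fX.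
move: hA low; case: (nu A) => [n| |] //= hA low.
- rewrite lte_fin in hA.
  apply: alg_key2 => //; apply: alg_key => //.
  have := le_trans low hint; rewrite lee_fin; exact.
- move: (le_trans low hint).
  by rewrite muleC gt0_mulye ?lte_fin ?divr_gt0 ?mulr_gt0 ?exprn_gt0.
Qed.

Theorem proposition3p3 (R : realType)
  (* Levy measure nu on R^* *)
  (nu : {measure set R -> \bar R})
  (hnu0 : nu [set 0] = 0%E)
  (hnuL : (\int[nu]_x (Num.min 1 (x ^+ 2))%:E < +oo)%E)
  (* constraint set *)
  (Cset : set R) (hCcl : closed Cset) (hC0 : Cset 0)
  (alpha : R) (halpha : 0 < alpha)
  (* phi = varphi_t(omega), psi = psi_t(omega, .) at the fixed (t, omega) *)
  (phi : R) (psi : R -> R)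
  (hpsim : measurable_fun setT psi)
  (hpsib : exists M : R, forall x, `|psi x| <= M)
  (hpsi1 : forall x, -1 < psi x)
  (hpsi2 : nu.-integrable setT (fun x => (psi x ^+ 2)%:E))
  (hpos : (0 < nu [set x | (0 < psi x)%R])%E)
  (hneg : (0 < nu [set x | (psi x < 0)%R])%E)
  (c C : R) (hc : 0 < c) (hC : 0 < C)
  (hCpos : (0 < nu [set x | (C < psi x)%R])%E)
  (hcneg : (0 < nu [set x | (psi x < - c)%R])%E)
  (* u in L^2(nu) cap L^infty(nu) *)
  (u : R -> R) (hum : measurable_fun setT u)
  (hu2 : nu.-integrable setT (fun x => (u x ^+ 2)%:E))
  (huinf : (Linf_norm nu u < +oo)%E)
  (pistar : R)
  (hpi : is_argmin Cset (objective nu alpha u psi phi) pistar) :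
  let nC := fine (nu [set x | C < psi x]) in
  let nc := fine (nu [set x | psi x < - c]) in
  let ui := fine (Linf_norm nu u) in
  let ua := fine (abs_alpha nu alpha u) in
  - 3 * ui / C - 2 * `|phi| / (alpha * nC * C ^+ 2)
    - Num.sqrt 2 / (Num.sqrt (alpha * nC) * C) * Num.sqrt ua
  <= pistar <=
  3 * ui / c + 2 * `|phi| / (alpha * nc * c ^+ 2)
    + Num.sqrt 2 / (Num.sqrt (alpha * nc) * c) * Num.sqrt ua.
Proof.
cbv zeta.
set nC := fine (nu [set x | C < psi x]).
set nc := fine (nu [set x | psi x < - c]).
set ui := fine (Linf_norm nu u).
set ua := fine (abs_alpha nu alpha u).
have mpre : forall B, measurable B -> measurable (psi @^-1` B).
  by move=> B mB; rewrite -[_ @^-1` _]setTI; exact: hpsim.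
have mSC : measurable [set x | C < psi x].
  have -> : [set x | C < psi x] = psi @^-1` `]C, +oo[.
    by apply/seteqP; split => x /=; rewrite in_itv /= andbT.
  by apply: mpre; exact: measurable_itv.
have mSc : measurable [set x | psi x < - c].
  have -> : [set x | psi x < - c] = psi @^-1` `]-oo, - c[.
    by apply/seteqP; split => x /=; rewrite in_itv /=.
  by apply: mpre; exact: measurable_itv.
have nuT : (0 < nu [set: R])%E.
  apply: (lt_le_trans hCpos); apply: le_measure; rewrite ?inE //.
have ess0 : (0 <= Linf_norm nu u)%E.
  by apply: ess_sup_gee => //; apply: nearW => x; rewrite lee_fin.
have uiE : Linf_norm nu u = ui%:E.
  by rewrite /ui fineK // ge0_fin_numE.
have ui0 : 0 <= ui by rewrite -lee_fin -uiE.
have hub : {ae nu, forall x, `|u x| <= ui}.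
  apply: filterS (ess_sup_ge nu (fun x => (`|u x|)%:E)) => x.
  by rewrite -/(Linf_norm nu u) uiE lee_fin.
have mgu : forall p, measurable_fun setT (fun x => (g_alpha alpha (u x - p * psi x))%:E).
  move=> p; apply: measurable_g.
  exact: measurable_funB hum (measurable_funM (measurable_cst _) hpsim).
set K := alpha * expR (alpha * ui).
have K0 : 0 <= K by rewrite mulr_ge0 ?expR_ge0 // ltW.
have abs0 : (0 <= abs_alpha nu alpha u)%E.
  by apply: integral_ge0 => x _; rewrite lee_fin g_ge0.
have absfin : (abs_alpha nu alpha u < +oo)%E.
  apply: (@le_lt_trans _ _ (\int[nu]_x (K%:E * (u x ^+ 2)%:E))%E).
    apply: ae_ge0_le_integral => //.
    - by move=> x _; rewrite lee_fin g_ge0.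
    - have := mgu 0; apply: eq_measurable_fun => x _; by rewrite mul0r subr0.
    - by move=> x _; rewrite mule_ge0 // lee_fin ?sqr_ge0.
    - apply: emeasurable_funM => //; exact: measurable_int hu2.
    apply: filterS hub => x hx _.
    by rewrite -EFinM lee_fin g_up.
  rewrite ge0_integralZl_EFin //; last first.
    - exact: measurable_int hu2.
    - by move=> x _; rewrite lee_fin sqr_ge0.
  apply: lte_mul_pinfty => //.
  exact: integrable_lty hu2.
have uaE : abs_alpha nu alpha u = ua%:E.
  by rewrite /ua fineK // ge0_fin_numE.
have ua0 : 0 <= ua by rewrite -lee_fin -uaE.
have hint : (\int[nu]_x (g_alpha alpha (u x - pistar * psi x))%:E <= (ua + pistar * phi)%:E)%E.
  have e0 : objective nu alpha u psi phi 0 = ua%:E.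
    rewrite /objective mul0r sube0 -uaE /abs_alpha.
    by apply: eq_integral => x _; rewrite mul0r subr0.
  have := hpi.2 0 hC0; rewrite e0 /objective.
  by rewrite leeBlDr // EFinD.
have fm : measurable_fun setT (fun x => u x - pistar * psi x).
  exact: measurable_funB hum (measurable_funM (measurable_cst _) hpsim).
apply/andP; split.
- rewrite -lerN2.
  have -> : - (- 3 * ui / C - 2 * `|phi| / (alpha * nC * C ^+ 2)
      - Num.sqrt 2 / (Num.sqrt (alpha * nC) * C) * Num.sqrt ua) =
    3 * ui / C + 2 * `|phi| / (alpha * nC * C ^+ 2)
      + Num.sqrt 2 / (Num.sqrt (alpha * nC) * C) * Num.sqrt ua by ring.
  have [pneg|ppos] := leP 0 pistar.
    apply: small_case => //; first by rewrite /nC fine_ge0 // measure_ge0.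
    by rewrite mulNr; nra.
  apply: (@key R nu _ mSC _ fm) => //.
  + apply: filterS hub => x hx /= Cx.
    have h2 : - u x <= `|u x| by rewrite -normrN ler_norm.
    nra.
  + apply: le_trans hint _; rewrite lee_fin lerD2l.
    have h3 : - phi <= `|phi| by rewrite -normrN ler_norm.
    nra.
- have [pneg|ppos] := leP pistar 0.
    apply: small_case => //; first by rewrite /nc fine_ge0 // measure_ge0.
    nra.
  apply: (@key R nu _ mSc _ fm) => //.
  + apply: filterS hub => x hx /= cx.
    have h2 : - u x <= `|u x| by rewrite -normrN ler_norm.
    nra.
  + apply: le_trans hint _; rewrite lee_fin lerD2l.
    have h3 : phi <= `|phi| by rewrite ler_norm.
    nra.
Qed.
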